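(* Let $U\in U(2^n)$ be an $n$-qubit unitary and $d=2^n$. Run the Twin-$U$ circuit with inputs $\vec i,\vec j\in\{0,1\}^n$. Then the probability of obtaining outputs $\vec k$ on register $\mathcal{A}$ and $\vec\ell$ on register $\mathcal{B}$ is $$P(\vec K=(\vec k,\vec\ell)\mid \vec J=(\vec i,\vec j)) = \frac{1}{d^2}\left|\mathrm{Tr}\!\left[U P^{\vec i,\vec j} U^T P^{\vec k,\vec\ell}\right]\right|^2,$$ where $U^T$ is the transpose in the computational basis.
   Context: Labeling of Paulis: $P^{00}=I$, $P^{01}=X$, $P^{10}=Z$, $P^{11}=Y$ (standard Pauli matrices), and $P^{\vec a,\vec b}=P^{a_1b_1}\otimes\cdots\otimes P^{a_nb_n}$. Twin-$U$ circuit: two registers $\mathcal{A},\mathcal{B}$ of $n$ qubits each are prepared in $|\vec i\rangle_{\mathcal{A}}|\vec j\rangle_{\mathcal{B}}$; apply $H^{\otimes n}$ to $\mathcal{A}$; apply CNOTs from qubit $r$ of $\mathcal{A}$ (control) to qubit $r$ of $\mathcal{B}$ (target), $r=1,\dots,n$; apply $U$ to $\mathcal{A}$ and $U$ to $\mathcal{B}$; apply the same transversal CNOTs again; apply $H^{\otimes n}$ to $\mathcal{A}$; measure both registers in the computational basis, yielding $\vec k$ on $\mathcal{A}$ and $\vec \ell$ on $\mathcal{B}$. *)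

(* Defs.v *)
From HB Require Import structures.
From mathcomp Require Import all_boot all_order all_algebra.
From mathcomp Require Import mxtens.
Set Implicit Arguments. Unset Strict Implicit. Unset Printing Implicit Defensive.
Import Order.TTheory GRing.Theory Num.Theory.
Local Open Scope ring_scope.

Section Qubits.
Variable C : numClosedFieldType.

Definition pauli (a b : bool) : 'M[C]_2 :=
  \matrix_(x < 2, y < 2)
    match a, b with
    | false, false => (x == y)%:R
    | false, true  => (x != y)%:R
    | true,  false => if x == y then (if x == 0 :> nat then 1 else -1) else 0
    | true,  true  => if x == y then 0 else
                        (if x == 0 :> nat then - 'i else 'i)
    end.

Definition hadamard : 'M[C]_2 :=
  (sqrtC 2)^-1 *: \matrix_(x < 2, y < 2) (if (x == 1 :> nat) && (y == 1 :> nat) then -1 else 1).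

Definition proj (b : bool) : 'M[C]_2 := delta_mx (inord b) (inord b).

(** qtens f n = f 0 (x) f 1 (x) ... (x) f (n-1) (Kronecker product);
    qubit 0 is the leftmost (most significant) tensor factor. *)
Fixpoint qtens_rec (f : nat -> 'M[C]_2) (k : nat) : 'M[C]_(2 ^ k.+1) :=
  match k return 'M[C]_(2 ^ k.+1) with
  | 0 => f 0%N
  | k'.+1 => f 0%N *t qtens_rec (fun r => f r.+1) k'
  end.
Definition qtens (f : nat -> 'M[C]_2) (n : nat) : 'M[C]_(2 ^ n) :=
  match n return 'M[C]_(2 ^ n) with
  | 0 => 1
  | k.+1 => qtens_rec f k
  end.

Definition ket1 (b : bool) : 'cV[C]_2 := \col_(x < 2) (x == b :> nat)%:R.

Fixpoint ket_rec (b : nat -> bool) (k : nat) : 'cV[C]_(2 ^ k.+1) :=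
  match k return 'cV[C]_(2 ^ k.+1) with
  | 0 => ket1 (b 0%N)
  | k'.+1 => ket1 (b 0%N) *t ket_rec (fun r => b r.+1) k'
  end.
Definition ket (b : nat -> bool) (n : nat) : 'cV[C]_(2 ^ n) :=
  match n return 'cV[C]_(2 ^ n) with
  | 0 => 1
  | k.+1 => ket_rec b k
  end.

Definition bitf (n : nat) (v : n.-tuple bool) : nat -> bool := fun r => nth false v r.

Definition pauli_str (n : nat) (a b : n.-tuple bool) : 'M[C]_(2 ^ n) :=
  qtens (fun r => pauli (bitf a r) (bitf b r)) n.

Definition hadamard_n (n : nat) : 'M[C]_(2 ^ n) := qtens (fun _ => hadamard) n.

Definition on_qubit (n : nat) (g : 'M[C]_2) (r : nat) : 'M[C]_(2 ^ n) :=
  qtens (fun s => if s == r then g else 1) n.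

Definition cnot_AB (n : nat) (r : nat) : 'M[C]_(2 ^ n * 2 ^ n) :=
  on_qubit n (proj false) r *t 1 + on_qubit n (proj true) r *t on_qubit n (pauli false true) r.

(** transversal CNOTs, r = 1..n (they commute; product in order r = 0 .. n-1) *)
Definition cnot_trans (n : nat) : 'M[C]_(2 ^ n * 2 ^ n) :=
  \prod_(r < n) cnot_AB n r.

Definition twinU_circuit (n : nat) (U : 'M[C]_(2 ^ n)) : 'M[C]_(2 ^ n * 2 ^ n) :=
  (hadamard_n n *t 1) *m cnot_trans n *m (U *t U) *m cnot_trans n *m (hadamard_n n *t 1).

(** P(K = (k,l) | J = (i,j)) = | <k|_A <l|_B  Circ  |i>_A |j>_B |^2  (Born rule) *)
Definition twinU_prob (n : nat) (U : 'M[C]_(2 ^ n)) (i j k l : n.-tuple bool) : C :=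
  `| ((ket (bitf k) n *t ket (bitf l) n)^T *m twinU_circuit U
        *m (ket (bitf i) n *t ket (bitf j) n)) 0 0 | ^+ 2.

Definition unitary_mx (d : nat) (U : 'M[C]_d) : Prop :=
  (map_mx Num.conj U)^T *m U = 1%:M /\ U *m (map_mx Num.conj U)^T = 1%:M.

End Qubits.

(* Main.v *)
Require Import Defs.
From HB Require Import structures.
From mathcomp Require Import all_boot all_order all_algebra.
From mathcomp Require Import mxtens ring.
Import Order.TTheory GRing.Theory Num.Theory.
Local Open Scope ring_scope.


Definition b2o (b : bool) : 'I_2 := if b then ord_max else ord0.

Lemma b2oK (a : 'I_2) : b2o (a == 1%N :> nat) = a.
Proof. by apply: val_inj; case: a => [[|[|]]] //. Qed.

Lemma b2o_eq1 b : (b2o b == 1%N :> nat) = b.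
Proof. by case: b. Qed.

Fixpoint bits_rec (k : nat) : 'I_(2 ^ k.+1) -> nat -> bool :=
  match k return 'I_(2 ^ k.+1) -> nat -> bool with
  | 0 => fun x r => if r is 0 then (x == 1%N :> nat) else false
  | k'.+1 => fun x r => let u := @mxtens_unindex 2 (2 ^ k'.+1) x in
      if r is r'.+1 then bits_rec k' u.2 r' else (u.1 == 1%N :> nat)
  end.

Definition bits n : 'I_(2 ^ n) -> nat -> bool :=
  match n return 'I_(2 ^ n) -> nat -> bool with
  | 0 => fun _ _ => false
  | k.+1 => bits_rec k
  end.

Fixpoint idx_rec (k : nat) (b : nat -> bool) : 'I_(2 ^ k.+1) :=
  match k return 'I_(2 ^ k.+1) with
  | 0 => b2o (b 0%N)
  | k'.+1 => @mxtens_index 2 (2 ^ k'.+1) (b2o (b 0%N), idx_rec k' (fun r => b r.+1))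
  end.

Definition idx n (b : nat -> bool) : 'I_(2 ^ n) :=
  match n return 'I_(2 ^ n) with
  | 0 => ord0
  | k.+1 => idx_rec k b
  end.

Lemma bits_rec_S0 k (x : 'I_(2 ^ k.+2)) :
  bits_rec k.+1 x 0 = ((@mxtens_unindex 2 (2 ^ k.+1) x).1 == 1%N :> nat).
Proof. by []. Qed.
Lemma bits_rec_SS k (x : 'I_(2 ^ k.+2)) r :
  bits_rec k.+1 x r.+1 = bits_rec k (@mxtens_unindex 2 (2 ^ k.+1) x).2 r.
Proof. by []. Qed.
Lemma idx_rec_S k b :
  idx_rec k.+1 b = @mxtens_index 2 (2 ^ k.+1) (b2o (b 0%N), idx_rec k (fun r => b r.+1)).
Proof. by []. Qed.

Lemma bits_idx n b r : (r < n)%N -> bits n (idx n b) r = b r.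
Proof.
case: n => // k; rewrite /bits /idx.
elim: k b r => [|k IH] b [|r] h.
- by rewrite /= b2o_eq1.
- by [].
- by rewrite idx_rec_S bits_rec_S0 mxtens_indexK b2o_eq1.
- by rewrite idx_rec_S bits_rec_SS mxtens_indexK IH.
Qed.

Lemma bits_inj n (x y : 'I_(2 ^ n)) :
  (forall r, (r < n)%N -> bits n x r = bits n y r) -> x = y.
Proof.
case: n x y => [|k] x y.
  by move=> _; apply: val_inj; case: x => [[|]] //; case: y => [[|]].
rewrite /bits.
elim: k x y => [|k IH] x y h.
  move: (h 0%N isT) => /=; clear h.
  by case: x => [[|[|]]] //; case: y => [[|[|]]] // *; apply: val_inj.
case: (@mxtens_indexP 2 (2 ^ k.+1) x) h => a x'.
case: (@mxtens_indexP 2 (2 ^ k.+1) y) => b y' h.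
have h0 := h 0%N isT; rewrite !bits_rec_S0 !mxtens_indexK /= in h0.
have -> : a = b by rewrite -(b2oK a) -(b2oK b) h0.
congr mxtens_index; congr pair; apply: IH => r hr.
by have := h r.+1 hr; rewrite !bits_rec_SS !mxtens_indexK.
Qed.

Lemma idx_bits n x : idx n (bits n x) = x.
Proof. by apply: bits_inj => r hr; rewrite bits_idx. Qed.

Lemma eq_bitsP n (x y : 'I_(2 ^ n)) :
  reflect (forall r, (r < n)%N -> bits n x r = bits n y r) (x == y).
Proof.
apply: (iffP eqP) => [-> //|]; exact: bits_inj.
Qed.
Lemma qtens_rec_S (C : numClosedFieldType) (f : nat -> 'M[C]_2) k :
  qtens_rec f k.+1 = f 0%N *t qtens_rec (fun r => f r.+1) k.
Proof. by []. Qed.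

Lemma qtens_entry (C : numClosedFieldType) (f : nat -> 'M[C]_2) n x y :
  qtens f n x y = \prod_(r < n) f r (b2o (bits n x r)) (b2o (bits n y r)).
Proof.
case: n x y => [|k] x y.
  by rewrite big_ord0 /qtens; move: x y => [[|//] ?] [[|//] ?]; rewrite mxE.
rewrite /qtens /bits.
elim: k f x y => [|k IH] f x y.
  by rewrite big_ord1 /= !b2oK.
case: (@mxtens_indexP 2 (2 ^ k.+1) x) => a x'.
case: (@mxtens_indexP 2 (2 ^ k.+1) y) => b y'.
rewrite qtens_rec_S tensmxE big_ord_recl IH.
congr (_ * _); first by rewrite !bits_rec_S0 !mxtens_indexK !b2oK.
by apply: eq_bigr => r _; rewrite lift0 !bits_rec_SS !mxtens_indexK.
Qed.

Lemma ket_rec_S (C : numClosedFieldType) b k :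
  ket_rec C b k.+1 = ket1 C (b 0%N) *t ket_rec C (fun r => b r.+1) k.
Proof. by []. Qed.

Lemma ket_entry (C : numClosedFieldType) b n x j :
  ket C b n x j = (x == idx n b)%:R.
Proof.
case: n x j => [|k] x j.
  rewrite /ket /idx; move: x j => [[|//] ?] [[|//] ?]; by rewrite mxE.
rewrite /ket /idx.
elim: k b x j => [|k IH] b x j.
  by rewrite /= mxE; case: (b 0%N).
case: (@mxtens_indexP 2 (2 ^ k.+1) x) => a x'.
rewrite ket_rec_S idx_rec_S mxE mxtens_indexK IH mxE.
rewrite (inj_eq (can_inj (@mxtens_indexK 2 (2 ^ k.+1)))) xpair_eqE.
have -> : (a == b 0%N :> nat) = (a == b2o (b 0%N)) by case: (b 0%N).
by rewrite /=; case: (a == _); case: (x' == _); rewrite /= ?mulr1 ?mulr0 ?mul0r.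
Qed.

Definition sg (C : numClosedFieldType) (b : bool) : C := if b then -1 else 1.
Definition om (C : numClosedFieldType) (a b : bool) : C := if a && b then - 'i else 1.

Lemma val_b2o c : nat_of_ord (b2o c) = nat_of_bool c.
Proof. by case: c. Qed.

Lemma hadamard_b2o (C : numClosedFieldType) u v :
  hadamard C (b2o u) (b2o v) = (sqrtC 2)^-1 * sg C (u && v).
Proof. by rewrite /hadamard !mxE !b2o_eq1. Qed.

Lemma pauli_b2o (C : numClosedFieldType) a b u v :
  pauli C a b (b2o u) (b2o v) = (v == u (+) b)%:R * sg C (a && u) * om C a b.
Proof.
rewrite /pauli mxE /sg /om.
by case: a; case: b; case: u; case: v; rewrite /= ?mulr1 ?mul1r ?mulr0 ?mul0r ?mulrN1 ?mulN1r ?opprK.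
Qed.

Lemma proj_b2o (C : numClosedFieldType) c u v :
  proj C c (b2o u) (b2o v) = ((u == c) && (v == c))%:R :> C.
Proof.
have E : forall c : bool, inord c = b2o c :> 'I_2.
  by case; apply: val_inj; rewrite /= inordK.
by rewrite /proj mxE !E; case: c; case: u; case: v.
Qed.

Lemma one_b2o (C : numClosedFieldType) u v :
  (1 : 'M[C]_2) (b2o u) (b2o v) = (u == v)%:R.
Proof. by rewrite mxE; case: u; case: v. Qed.

Lemma X_b2o (C : numClosedFieldType) u v :
  pauli C false true (b2o u) (b2o v) = (v == ~~ u)%:R.
Proof. by rewrite pauli_b2o /sg /om /= mulr1 mulr1 addbT. Qed.

Lemma prod_forall (C : numClosedFieldType) n (P : 'I_n -> bool) :
  \prod_(r < n) ((P r)%:R : C) = [forall r, P r]%:R.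
Proof.
case: forallP => h.
  by rewrite big1 // => r _; rewrite h.
have [r Pr] : exists r, ~~ P r.
  by apply/existsP; move: h => /forallP; rewrite negb_forall.
by rewrite (bigD1 r) //= (negbTE Pr) mul0r.
Qed.

Lemma prod_ind (C : numClosedFieldType) n (y : 'I_(2 ^ n)) (c : nat -> bool) :
  \prod_(r < n) ((bits n y r == c r)%:R : C) = (y == idx n c)%:R.
Proof.
rewrite prod_forall; congr (_%:R).
case: (y =P idx n c) => [->|ne].
  by case: forallP => // h; exfalso; apply: h => r; rewrite bits_idx.
case: forallP => // h; exfalso; apply: ne; apply: bits_inj => r hr.
by rewrite bits_idx //; apply/eqP/(h (Ordinal hr)).
Qed.

Lemma idx_ext n b b' : (forall r, (r < n)%N -> b r = b' r) -> idx n b = idx n b'.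
Proof. by move=> h; apply: bits_inj => r hr; rewrite !bits_idx // h. Qed.

Lemma eq_prod (C : numClosedFieldType) n (x y : 'I_(2 ^ n)) :
  ((x == y)%:R : C) = \prod_(r < n) ((bits n x r == bits n y r)%:R : C).
Proof. by rewrite prod_ind idx_bits. Qed.

Definition xr n (x : 'I_(2 ^ n)) (b : nat -> bool) : 'I_(2 ^ n) :=
  idx n (fun r => bits n x r (+) b r).
Definition dot (C : numClosedFieldType) n (b : nat -> bool) (x : 'I_(2 ^ n)) : C :=
  \prod_(r < n) sg C (b r && bits n x r).

Lemma hadn_entry (C : numClosedFieldType) n x y :
  hadamard_n C n x y = (sqrtC 2)^-1 ^+ n * \prod_(r < n) sg C (bits n x r && bits n y r).
Proof.
by rewrite /hadamard_n qtens_entry (eq_bigr _ (fun r _ => hadamard_b2o _ _ _)) big_split /= prodr_const card_ord.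
Qed.

Lemma paulistr_entry (C : numClosedFieldType) n (i j : n.-tuple bool) x y :
  pauli_str C i j x y = (y == xr n x (bitf j))%:R * dot C n (bitf i) x
     * \prod_(r < n) om C (bitf i r) (bitf j r).
Proof.
rewrite /pauli_str qtens_entry (eq_bigr _ (fun r _ => pauli_b2o _ _ _ _ _)).
by rewrite !big_split /= (prod_ind C n y (fun r => bits n x r (+) bitf j r)).
Qed.

Definition fmx (C : numClosedFieldType) {N} (g : 'I_N -> 'I_N) : 'M[C]_N :=
  \matrix_(p, q) (q == g p)%:R.

Lemma fmx_mul (C : numClosedFieldType) N (g h : 'I_N -> 'I_N) :
  fmx C g *m fmx C h = fmx C (h \o g).
Proof.
apply/matrixP => p q; rewrite !mxE (bigD1 (g p)) //= !mxE eqxx mul1r.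
by rewrite big1 ?addr0 // => k /negbTE nk; rewrite !mxE nk mul0r.
Qed.

Lemma fmx_mulv (C : numClosedFieldType) N M (g : 'I_N -> 'I_N) (v : 'M[C]_(N, M)) p j :
  (fmx C g *m v) p j = v (g p) j.
Proof.
rewrite !mxE (bigD1 (g p)) //= !mxE eqxx mul1r.
by rewrite big1 ?addr0 // => k /negbTE nk; rewrite !mxE nk mul0r.
Qed.

Lemma fmx_tr (C : numClosedFieldType) N (g : 'I_N -> 'I_N) :
  (forall p, g (g p) = p) -> (fmx C g)^T = fmx C g.
Proof.
move=> gK; apply/matrixP => p q; rewrite !mxE.
by rewrite -(can_eq gK) gK eq_sym.
Qed.

Lemma fmx_id (C : numClosedFieldType) N : fmx C (@id 'I_N) = 1.
Proof. by apply/matrixP => p q; rewrite !mxE eq_sym. Qed.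

Definition Gm n m (p : 'I_(2 ^ n * 2 ^ n)) : 'I_(2 ^ n * 2 ^ n) :=
  mxtens_index ((mxtens_unindex p).1, idx n (fun s => bits n (mxtens_unindex p).2 s (+) ((s < m)%N && bits n (mxtens_unindex p).1 s))).

Definition cn n r (p : 'I_(2 ^ n * 2 ^ n)) : 'I_(2 ^ n * 2 ^ n) :=
  mxtens_index ((mxtens_unindex p).1, idx n (fun s => bits n (mxtens_unindex p).2 s (+) ((s == r) && bits n (mxtens_unindex p).1 s))).

Lemma b2o_eq a b : (b2o a == b2o b) = (a == b).
Proof. by case: a; case: b. Qed.

Lemma natr_and (C : numClosedFieldType) (a b : bool) : ((a && b)%:R : C) = a%:R * b%:R.
Proof. by case: a; case: b; rewrite ?mulr1 ?mulr0. Qed.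

Lemma cnot_AB_fmx (C : numClosedFieldType) n r : (r < n)%N -> cnot_AB C n r = fmx C (cn n r).
Proof.
move=> hr; apply/matrixP => p q.
case: (mxtens_indexP p) => x y; case: (mxtens_indexP q) => x' y'.
rewrite /cnot_AB /fmx /cn !mxE !mxtens_indexK.
rewrite (inj_eq (can_inj (@mxtens_indexK (2 ^ n) (2 ^ n)))) xpair_eqE natr_and.
rewrite /on_qubit !qtens_entry /=.
rewrite -(prod_ind C n y' (fun s => bits n y s (+) ((s == r) && bits n x s))).
rewrite (eq_prod _ _ y) (eq_prod _ _ x') -!big_split /=.
case hx: (bits n x r).
  rewrite [X in X + _](bigD1 (Ordinal hr)) //= eqxx proj_b2o hx /= !mul0r add0r.
  apply: eq_bigr => s _; case: eqP => [e|ne].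
    by rewrite proj_b2o X_b2o e hx /= addbT.
  by rewrite !mxE !b2o_eq /= addbF eq_sym (eq_sym (bits n y s)).
rewrite [X in _ + X](bigD1 (Ordinal hr)) //= eqxx proj_b2o hx /= !mul0r addr0.
apply: eq_bigr => s _; case: eqP => [e|ne].
  by rewrite proj_b2o e hx /= addbF (eq_sym (bits n y r)).
by rewrite /= ?one_b2o addbF eq_sym (eq_sym (bits n y s)).
Qed.

Lemma Gm0 n p : Gm n 0 p = p.
Proof.
rewrite /Gm -[RHS](mxtens_unindexK p); congr mxtens_index; congr pair.
by rewrite -[RHS]idx_bits; apply: idx_ext => s _; rewrite addbF.
Qed.

Lemma cnG n m p : cn n m (Gm n m p) = Gm n m.+1 p.
Proof.
rewrite /cn /Gm mxtens_indexK /=; congr mxtens_index; congr pair.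
apply: idx_ext => s hs; rewrite bits_idx //.
have -> : (s < m.+1)%N = (s < m)%N || (s == m) by rewrite ltnS leq_eqVlt orbC.
by rewrite -addbA; case: ltngtP => _; rewrite /= ?addbF //; case: (bits n _ s).
Qed.

Lemma GK n p : Gm n n (Gm n n p) = p.
Proof.
rewrite {1}/Gm /Gm mxtens_indexK /=.
rewrite -[RHS](mxtens_unindexK p); congr mxtens_index; congr pair.
rewrite -[RHS]idx_bits; apply: idx_ext => s hs; rewrite bits_idx // hs /=.
by rewrite -addbA addbb addbF.
Qed.

Lemma cnot_prefix (C : numClosedFieldType) n m : (m <= n)%N ->
  \prod_(r < m) cnot_AB C n r = fmx C (Gm n m).
Proof.
elim: m => [|m IH] hm.
  by rewrite big_ord0; apply/matrixP => p q; rewrite !mxE Gm0 eq_sym.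
rewrite big_ord_recr /= IH ?(ltnW hm) // cnot_AB_fmx // -mulmxE fmx_mul.
by apply/matrixP => p q; rewrite !mxE /= cnG.
Qed.

Lemma cnot_trans_fmx (C : numClosedFieldType) n : cnot_trans C n = fmx C (Gm n n).
Proof. exact: cnot_prefix. Qed.

Lemma sum_ind_r (C : numClosedFieldType) N (F : 'I_N -> C) a :
  \sum_k F k * (k == a)%:R = F a.
Proof.
rewrite (bigD1 a) //= eqxx mulr1 big1 ?addr0 // => k /negbTE ->; exact: mulr0.
Qed.

Lemma sum_ind_l (C : numClosedFieldType) N (F : 'I_N -> C) a :
  \sum_k (k == a)%:R * F k = F a.
Proof.
rewrite (bigD1 a) //= eqxx mul1r big1 ?addr0 // => k /negbTE ->; exact: mul0r.
Qed.

Lemma xr_eq n (x y : 'I_(2 ^ n)) b :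
  (idx n (fun s => bits n y s (+) ((s < n)%N && bits n x s)) == idx n b) = (y == xr n x b).
Proof.
apply/eq_bitsP/eq_bitsP => h r hr; move: (h r hr); rewrite /xr !bits_idx // hr /=.
  by move=> <-; case: (bits n y r); case: (bits n x r).
by move=> ->; case: (b r); case: (bits n x r).
Qed.

Lemma Vec_entry (C : numClosedFieldType) n (i j : n.-tuple bool) x y c :
  (cnot_trans C n *m (hadamard_n C n *t 1) *m (ket C (bitf i) n *t ket C (bitf j) n))
     (mxtens_index (x, y)) c
  = (sqrtC 2)^-1 ^+ n * dot C n (bitf i) x * (y == xr n x (bitf j))%:R.
Proof.
rewrite cnot_trans_fmx -mulmxA fmx_mulv tensmx_mul mul1mx.
rewrite /Gm mxE !mxtens_indexK /= ket_entry xr_eq mxE.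
under eq_bigr do rewrite ket_entry.
rewrite sum_ind_r hadn_entry; congr (_ * _ * _).
by apply: eq_bigr => r _; rewrite bits_idx // andbC.
Qed.

Lemma mulmx_entry (C : numClosedFieldType) m p q (A : 'M[C]_(m, p)) (B : 'M[C]_(p, q)) i j :
  (A *m B) i j = \sum_k A i k * B k j.
Proof. by rewrite mxE. Qed.

Lemma tr_entry (C : numClosedFieldType) m p (A : 'M[C]_(m, p)) i j : A^T i j = A j i.
Proof. by rewrite mxE. Qed.

Lemma sum_pair (C : numClosedFieldType) N M (F : 'I_(N * M) -> C) :
  \sum_p F p = \sum_x \sum_y F (mxtens_index (x, y)).
Proof.
rewrite pair_big /= (reindex (@mxtens_index N M)) /=.
  by apply: eq_bigr => -[a b].
by exists (@mxtens_unindex N M) => u _; rewrite (mxtens_indexK, mxtens_unindexK).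
Qed.

Lemma xr_sym n (a y : 'I_(2 ^ n)) b : (y == xr n a b) = (a == xr n y b).
Proof.
apply/eq_bitsP/eq_bitsP => h r hr; move: (h r hr); rewrite /xr !bits_idx // => ->;
by case: (b r); case: (bits n _ r).
Qed.

Lemma dot_xr (C : numClosedFieldType) n (k : nat -> bool) (y : 'I_(2 ^ n)) l :
  dot C n k (xr n y l) = dot C n k y * \prod_(r < n) sg C (k r && l r).
Proof.
rewrite /dot -big_split; apply: eq_bigr => r _ /=; rewrite /xr bits_idx //.
by case: (k r); case: (l r); case: (bits n y r); rewrite /sg /= ?mulr1 ?mul1r ?mulrNN ?mulr1 ?mulN1r ?opprK.
Qed.

Lemma hadn_tr (C : numClosedFieldType) n : (hadamard_n C n)^T = hadamard_n C n.
Proof.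
apply/matrixP => x y; rewrite tr_entry !hadn_entry; congr (_ * _).
by apply: eq_bigr => r _; rewrite andbC.
Qed.

Lemma cnot_tr (C : numClosedFieldType) n : (cnot_trans C n)^T = cnot_trans C n.
Proof. by rewrite cnot_trans_fmx fmx_tr // => p; rewrite GK. Qed.

Lemma move_ind (C : numClosedFieldType) (a i b c d e : C) :
  a * (i * b * c) * d * e = i * (a * b * c * d * e).
Proof. ring. Qed.

Lemma move_ind2 (C : numClosedFieldType) (a b c d i : C) :
  a * b * (c * d * i) = i * (a * b * (c * d)).
Proof. ring. Qed.

Lemma move_ind3 (C : numClosedFieldType) (a b i e f : C) :
  a * b * i * e * f = i * (a * b * e * f).
Proof. ring. Qed.

Theorem lemma4 (C : numClosedFieldType) (n : nat) (U : 'M[C]_(2 ^ n))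
    (i j k l : n.-tuple bool) :
  unitary_mx U ->
  twinU_prob U i j k l =
    ((2 ^ n)%:R ^+ 2)^-1
      * `| \tr (U *m pauli_str C i j *m U^T *m pauli_str C k l) | ^+ 2.
Proof.
move=> _.
pose S := \sum_(x < 2 ^ n) \sum_(x' < 2 ^ n)
   dot C n (bitf k) x * dot C n (bitf i) x' * U x x' * U (xr n x (bitf l)) (xr n x' (bitf j)).
pose c : C := (sqrtC 2)^-1 ^+ n.
pose W := (\prod_(r < n) om C (bitf i r) (bitf j r)) * (\prod_(r < n) om C (bitf k r) (bitf l r))
          * \prod_(r < n) sg C (bitf k r && bitf l r).
have Tr : \tr (U *m pauli_str C i j *m U^T *m pauli_str C k l) = W * S.
  have P1E := paulistr_entry C n i j; have P2E := paulistr_entry C n k l.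
  move: (pauli_str C i j) (pauli_str C k l) P1E P2E => P1 P2 P1E P2E.
  rewrite /mxtrace.
  under eq_bigr => y _ do rewrite mulmx_entry.
  under eq_bigr => y _ do under eq_bigr => a _ do rewrite P2E xr_sym -mulrA mulrCA.
  under eq_bigr => y _ do rewrite sum_ind_l mulmx_entry mulr_suml.
  under eq_bigr => y _ do under eq_bigr => b _ do rewrite tr_entry mulmx_entry !mulr_suml.
  under eq_bigr => y _ do rewrite exchange_big.
  under eq_bigr => y _ do under eq_bigr => c' _ do under eq_bigr => b _ do rewrite P1E move_ind.
  under eq_bigr => y _ do under eq_bigr => c' _ do rewrite sum_ind_l.
  rewrite /W /S mulr_sumr; apply: eq_bigr => y _; rewrite mulr_sumr; apply: eq_bigr => c' _.
  rewrite dot_xr; ring.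
have Amp : ((ket C (bitf k) n *t ket C (bitf l) n)^T *m twinU_circuit U
        *m (ket C (bitf i) n *t ket C (bitf j) n)) 0 0 = c * c * S.
  rewrite /twinU_circuit.
  have -> : forall (K Kij : 'cV[C]_(2 ^ n * 2 ^ n)),
     K^T *m (hadamard_n C n *t 1 *m cnot_trans C n *m (U *t U) *m cnot_trans C n
       *m (hadamard_n C n *t 1)) *m Kij =
     (cnot_trans C n *m (hadamard_n C n *t 1) *m K)^T *m (U *t U)
       *m (cnot_trans C n *m (hadamard_n C n *t 1) *m Kij).
    by move=> K Kij; rewrite !trmx_mul trmx_tens hadn_tr trmx1 cnot_tr !mulmxA.
  move: (Vec_entry C n k l) (Vec_entry C n i j).
  move: (cnot_trans C n *m (hadamard_n C n *t 1) *m (ket C (bitf k) n *t ket C (bitf l) n)) => V1.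
  move: (cnot_trans C n *m (hadamard_n C n *t 1) *m (ket C (bitf i) n *t ket C (bitf j) n)) => V2.
  move=> V1E V2E.
  rewrite mulmx_entry; under eq_bigr => q _ do rewrite mulmx_entry mulr_suml.
  rewrite exchange_big /= sum_pair.
  under eq_bigr => x _ do under eq_bigr => y _ do rewrite sum_pair.
  under eq_bigr => x _ do under eq_bigr => y _ do under eq_bigr => x' _ do
    under eq_bigr => y' _ do rewrite tr_entry V1E V2E tensmxE move_ind2.
  under eq_bigr => x _ do under eq_bigr => y _ do under eq_bigr => x' _ do rewrite sum_ind_l move_ind3.
  under eq_bigr => x _ do under eq_bigr => y _ do rewrite -mulr_sumr.
  under eq_bigr => x _ do rewrite sum_ind_l.
  rewrite /S mulr_sumr; apply: eq_bigr => x _; rewrite mulr_sumr; apply: eq_bigr => x' _.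
  rewrite /c; ring.
have hW : `|W| = 1.
  by rewrite /W !normrM !normr_prod !big1 ?mulr1 // => r _;
    rewrite /sg /om; case: (_ && _); rewrite ?normrN ?normCi ?normr1.
have hc : c * c = ((2 ^ n)%:R)^-1.
  by rewrite /c -exprMn -expr2 exprVn sqrtCK natrX exprVn.
rewrite /twinU_prob Amp Tr [`|W * S|]normrM hW mul1r normrM exprMn hc.
by rewrite normfV normr_nat exprVn.
Qed.
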